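(* Let $V:\mathbb{R}^d\to\mathbb{R}^n$ be continuously differentiable and $h$-homogeneous, and suppose there are constants $C,\ell>0$ with $\Vert V(\theta)\Vert_\mu\le C\Vert\theta\Vert^\ell$ for all $\theta$. Let $B=\frac{\Vert (I-\gamma P)V^*\Vert_\mu}{1-\gamma}=\frac{\Vert R\Vert_\mu}{1-\gamma}$. Then for any initial condition $\theta(0)=\theta_0$, if $\theta(t)$ follows the dynamics $$\dot\theta=-\nabla V(\theta)^T A\,(V(\theta)-V^* ),$$ we have $\liminf_{t\to\infty}\Vert V(\theta(t))\Vert_\mu\le B$.
   Context: A Markov reward process has finite state space $\mathcal{S}$ with $|\mathcal{S}|=n$, transition matrix $P$ (entries $P(s'|s)$) defining an irreducible, aperiodic Markov chain with stationary distribution $\mu$, a finite reward function $r(s,s')$, and discount factor $\gamma\in[0,1)$. Let $R\in\mathbb{R}^n$ be $R(s)=\mathbb{E}_{s'\sim P(\cdot|s)}[r(s,s')]$, and let $V^*\in\mathbb{R}^n$ be the true value function, the unique solution of $V^*=R+\gamma PV^*$. Let $D_\mu$ be the diagonal matrix with $\mu$ on the diagonal and $A:=D_\mu(I-\gamma P)$. For $x\in\mathbb{R}^n$, $\Vert x\Vert_\mu^2=x^TD_\mu x=\sum_s\mu(s)x_s^2$; $\Vert\theta\Vert$ is the Euclidean norm. $\nabla V(\theta)$ denotes the $n\times d$ Jacobian of $V$. A differentiable function $f:\mathbb{R}^k\to\mathbb{R}^m$ is called $h$-homogeneous (for $h\in\mathbb{R}$) if $f(x)=h\,\nabla f(x)\,x$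 for all $x$. *)

(* Defs.v *)
From HB Require Import structures.
From mathcomp Require Import all_boot all_order all_algebra.
From mathcomp Require Import all_classical all_reals all_analysis.
Set Implicit Arguments. Unset Strict Implicit. Unset Printing Implicit Defensive.
Import Order.TTheory GRing.Theory Num.Theory.
Import numFieldNormedType.Exports.
Local Open Scope ring_scope.

(* Convention: vectors of R^n / R^d are ROW vectors 'rV[R]_n. States are 'I_n,
   P s s' = P(s'|s). *)

Section Defs.
Context {R : realType}.

Definition stochastic n (P : 'M[R]_n) :=
  (forall s s', 0 <= P s s') /\ (forall s, \sum_(s' < n) P s s' = 1).

Definition irreducible n (P : 'M[R]_n) :=
  forall s s' : 'I_n, exists k : nat, 0 < (P ^+ k) s s'.

(* the period of state s (gcd of {k >= 1 | P^k(s,s) > 0}) equals 1 *)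
Definition aperiodic n (P : 'M[R]_n) :=
  forall s : 'I_n, forall p : nat,
    (forall k : nat, (0 < k)%N -> 0 < (P ^+ k) s s -> (p %| k)%N) -> p = 1%N.

Definition stationary n (P : 'M[R]_n) (mu : 'rV[R]_n) :=
  (forall s, 0 <= mu 0 s) /\ \sum_(s < n) mu 0 s = 1 /\ mu *m P = mu.

Definition mu_norm n (mu x : 'rV[R]_n) : R :=
  Num.sqrt (\sum_(s < n) mu 0 s * x 0 s ^+ 2).

Definition euclid_norm d (x : 'rV[R]_d) : R :=
  Num.sqrt (\sum_(j < d) x 0 j ^+ 2).

Definition exp_reward n (P : 'M[R]_n) (r : 'I_n -> 'I_n -> R) : 'rV[R]_n :=
  \row_s \sum_(s' < n) P s s' * r s s'.

Definition Amat n (P : 'M[R]_n) (mu : 'rV[R]_n) (gamma : R) : 'M[R]_n :=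
  diag_mx mu *m (1%:M - gamma *: P).

(* The n x d Jacobian (nabla V)(theta), entry (i,j) = dV_i/dtheta_j
   (mathcomp's 'J is its transpose, d x n). *)
Definition Jac d n (V : 'rV[R]_d -> 'rV[R]_n) (theta : 'rV[R]_d) : 'M[R]_(n, d) :=
  (jacobian V theta)^T.

Definition C1 d n (V : 'rV[R]_d -> 'rV[R]_n) :=
  (forall theta, differentiable V theta) /\ continuous (Jac V).

(* h-homogeneous: V(x) = h * (nabla V(x)) x   (column form), i.e. in row form
   V x = h *: (x *m (nabla V x)^T) *)
Definition homogeneous d n (h : R) (V : 'rV[R]_d -> 'rV[R]_n) :=
  forall x, V x = h *: (x *m (Jac V x)^T).

End Defs.

(* Main.v *)
Require Import Defs.
From HB Require Import structures.
From mathcomp Require Import all_boot all_order all_algebra.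
From mathcomp Require Import all_classical all_reals all_analysis.
From mathcomp Require Import ring lra.
Import Order.TTheory GRing.Theory Num.Theory.
Import numFieldNormedType.Exports.
Local Open Scope classical_set_scope.
Local Open Scope ring_scope.
Lemma comp_derive (R : realType) m (F : R -> 'rV[R]_m) (t : R) (D : 'rV[R]_m) k :
  is_derive t 1 F D -> is_derive t 1 (fun s => F s 0 k) (D 0 k).
Proof.
move=> HD.
have dF : derivable F t 1 by case: HD.
have := @derive_val _ _ _ _ _ _ _ HD; rewrite derive_mx // => <-.
rewrite mxE; apply: derivableP.
by move/derivable_mxP: dF => /(_ 0 k).
Qed.

Lemma sqsum_derive (R : realType) m (F : R -> 'rV[R]_m) (t : R) (D : 'rV[R]_m) :
  is_derive t 1 F D ->
  is_derive t 1 (fun s => \sum_(k < m) F s 0 k ^+ 2)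
     (2 * \sum_(k < m) F t 0 k * D 0 k).
Proof.
move=> HD.
have -> : (fun s => \sum_(k < m) F s 0 k ^+ 2) =
   \sum_(k < m) (fun s => F s 0 k) ^+ 2.
  by apply/funext => s; rewrite fct_sumE.
apply: is_derive_eq; first apply: is_derive_sum => k.
  exact: (@is_deriveX _ _ _ 2 _ _ _ (@comp_derive _ _ _ _ _ k HD)).
rewrite mulr_sumr; apply: eq_bigr => k _.
rewrite /= expr1 [_ *: _]/(_ * _) mulrA. by [].

Qed.

Lemma ray_derive (R : realType) d n (V : 'rV[R]_d -> 'rV[R]_n) (th : 'rV[R]_d) (s : R) :
  (forall x, differentiable V x) ->
  is_derive s 1 (fun u : R => V (u *: th)) (th *m jacobian V (s *: th)).
Proof.
move=> dV.
have hd : is_diff s (V \o ( *:%R^~ th)) ('d V (s *: th) \o ( *:%R^~ th)).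
  exact: (is_diff_comp _ (differentiableP (dV _))).
have dg : differentiable (V \o ( *:%R^~ th)) s by case: hd.
apply: DeriveDef; first exact: diff_derivable.
rewrite (deriveE _ dg) (diff_val (is_diff_def:=hd)) /= scale1r.
by rewrite -deriveEjacobian // deriveE.
Qed.

Lemma wk_eq (R : realType) n (P : 'M[R]_n) (mu : 'rV[R]_n) (gamma : R) (v Vs Rw : 'rV[R]_n) k :
  Vs = Rw + gamma *: (Vs *m P^T) ->
  ((v - Vs) *m (Amat P mu gamma)^T) 0 k =
  mu 0 k * (v 0 k - gamma * \sum_(i < n) P k i * v 0 i - Rw 0 k).
Proof.
move=> HV.
have E : (v - Vs) *m (Amat P mu gamma)^T = (v - gamma *: (v *m P^T) - Rw) *m diag_mx mu.
  rewrite /Amat trmx_mul tr_diag_mx mulmxA; congr (_ *m _).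
  rewrite linearB /= tr_scalar_mx linearZ /= mulmxBr mulmx1 -scalemxAr.
  rewrite mulmxBl {1}HV scalerBr; set a := v *m P^T; set b := Vs *m P^T.
  by rewrite opprB opprD !addrA subrK addrAC.
rewrite E mul_mx_diag mxE [in RHS]mulrC; congr (_ * _).
rewrite !mxE; congr (_ - _ - _); congr (_ * _).
by apply: eq_bigr => i _; rewrite !mxE mulrC.
Qed.

Lemma liminf_le (R : realType) (f : R -> R) (B : R) :
  (forall e, 0 < e -> forall M, exists t, M < t /\ f t <= B + e) ->
  (limf_einf (fun t => (f t)%:E) (+oo%R : set_system R) <= B%:E)%E.
Proof.
move=> H; rewrite limf_einfE; apply: ge_ereal_sup => _ [S [M [Mr HM]] <-].
apply/lee_addgt0Pr => e e0.
have [t [Mt ft]] := H e e0 M.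
apply: le_trans (ereal_inf_lbound _) _; first by exists t; [apply: HM|reflexivity].
by rewrite -EFinD lee_fin.
Qed.

Lemma jensen (R : realType) n (p v : 'I_n -> R) :
  (forall i, 0 <= p i) -> \sum_i p i = 1 ->
  (\sum_i p i * v i) ^+ 2 <= \sum_i p i * v i ^+ 2.
Proof.
move=> p0 p1; set x := \sum_i p i * v i.
have H : 0 <= \sum_i p i * (v i - x) ^+ 2.
  by apply: sumr_ge0 => i _; apply: mulr_ge0 => //; apply: sqr_ge0.
have E : \sum_i p i * (v i - x) ^+ 2 =
   \sum_i p i * v i ^+ 2 + (- (2 * x)) * x + x ^+ 2 * \sum_i p i.
  rewrite (eq_bigr (fun i => p i * v i ^+ 2 + (- (2 * x)) * (p i * v i) + x ^+ 2 * p i)); last first.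
    by move=> i _; ring.
  by rewrite !big_split /= -!mulr_sumr.
move: H; rewrite E p1; lra.
Qed.

Lemma stat_sum (R : realType) n (P : 'M[R]_n) (mu : 'rV[R]_n) (w : 'I_n -> R) :
  stationary P mu ->
  \sum_k mu 0 k * (\sum_i P k i * w i) = \sum_i mu 0 i * w i.
Proof.
move=> [_ [_ HmuP]].
under eq_bigr do rewrite mulr_sumr.
rewrite exchange_big /=; apply: eq_bigr => i _.
rewrite -{2}HmuP mxE mulr_suml; apply: eq_bigr => k _; by rewrite mulrA.
Qed.

Lemma L1 (R : realType) n (P : 'M[R]_n) (mu : 'rV[R]_n) (v : 'rV[R]_n) :
  stochastic P -> stationary P mu ->
  \sum_k mu 0 k * v 0 k * (\sum_i P k i * v 0 i) <= \sum_k mu 0 k * v 0 k ^+ 2.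
Proof.
move=> [P0 P1] Hs.
have mu0 := Hs.1.
apply: le_trans (_ : _ <= \sum_k mu 0 k * ((v 0 k ^+ 2 + \sum_i P k i * v 0 i ^+ 2) / 2)) _.
  apply: ler_sum => k _; rewrite -mulrA; apply: ler_wpM2l => //.
  have J := @jensen R n (P k) (v 0) (P0 k) (P1 k).
  set x := \sum_i P k i * v 0 i in J *; set S := \sum_i P k i * v 0 i ^+ 2 in J *.
  have := sqr_ge0 (v 0 k - x); nra.
have -> : \sum_k mu 0 k * ((v 0 k ^+ 2 + \sum_i P k i * v 0 i ^+ 2) / 2) =
   (\sum_k mu 0 k * v 0 k ^+ 2 + \sum_k mu 0 k * (\sum_i P k i * v 0 i ^+ 2)) / 2.
  rewrite mulrDl !mulr_suml -big_split /=; apply: eq_bigr => k _; ring.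
rewrite (@stat_sum _ _ _ _ (fun i => v 0 i ^+ 2) Hs); lra.
Qed.

Lemma Gbound (R : realType) n (P : 'M[R]_n) (mu : 'rV[R]_n) (gamma : R) (v Rw : 'rV[R]_n) :
  stochastic P -> stationary P mu -> 0 <= gamma -> gamma < 1 ->
  (1 - gamma) ^+ 2 * (\sum_k mu 0 k * v 0 k ^+ 2) - \sum_k mu 0 k * Rw 0 k ^+ 2 <=
  2 * (1 - gamma) * \sum_k (mu 0 k * (v 0 k - gamma * \sum_i P k i * v 0 i - Rw 0 k)) * v 0 k.
Proof.
move=> HP Hs g0 g1.
have mu0 := Hs.1.
have HL1 := @L1 _ _ _ _ v HP Hs.
set lam := 1 - gamma.
have lam0 : 0 < lam by rewrite /lam subr_gt0.
set a2 := \sum_k mu 0 k * v 0 k ^+ 2 in HL1 *.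
set b2 := \sum_k mu 0 k * Rw 0 k ^+ 2.
set c := \sum_k mu 0 k * v 0 k * (\sum_i P k i * v 0 i) in HL1 *.
set e := \sum_k mu 0 k * v 0 k * Rw 0 k.
have HE : \sum_k (mu 0 k * (v 0 k - gamma * \sum_i P k i * v 0 i - Rw 0 k)) * v 0 k
   = a2 + (- gamma) * c + - e.
  rewrite /a2 /c /e mulr_sumr -sumrN -!big_split /=.
  by apply: eq_bigr => k _; ring.
have He : 2 * lam * e <= lam ^+ 2 * a2 + b2.
  rewrite /e /a2 /b2 mulr_sumr mulr_sumr -big_split /=.
  apply: ler_sum => k _.
  have := mu0 k; have := sqr_ge0 (lam * v 0 k - Rw 0 k).
  move=> h1 h2.
  have h3 := mulr_ge0 h2 h1.
  nra.
rewrite HE.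
have H1 : gamma * c <= gamma * a2 by apply: ler_wpM2l.
have H2 : 2 * lam * (gamma * c) <= 2 * lam * (gamma * a2).
  by apply: ler_wpM2l => //; apply: mulr_ge0 => //; apply: ltW.
rewrite /lam in He H2 *.
nra.
Qed.

Lemma dot_eq (R : realType) d n (th : 'rV[R]_d) (w : 'rV[R]_n) (J : 'M[R]_(n, d)) :
  \sum_j th 0 j * (- (w *m J)) 0 j = - \sum_k w 0 k * (th *m J^T) 0 k.
Proof.
rewrite -sumrN.
under eq_bigr do rewrite !mxE mulrN mulr_sumr.
under [in RHS]eq_bigr do rewrite !mxE mulr_sumr -sumrN.
rewrite exchange_big /=; apply: eq_bigr => j _; rewrite -sumrN.
by apply: eq_bigr => k _; rewrite mxE; ring.
Qed.

Lemma hom_jac (R : realType) d n (V : 'rV[R]_d -> 'rV[R]_n) (h : R) x :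
  homogeneous h V -> V x = h *: (x *m jacobian V x).
Proof. by move=> Hh; rewrite {1}Hh /Jac trmxK. Qed.

Lemma V_zero (R : realType) d n (V : 'rV[R]_d -> 'rV[R]_n) (h : R) :
  h <= 0 -> (forall x, differentiable V x) -> homogeneous h V -> forall th, V th = 0.
Proof.
move=> h0 dV Hh th.
have [he|hneg] := eqVneq h 0.
  by rewrite (@hom_jac _ _ _ V h (th) Hh) he scale0r.
have hlt : h < 0 by rewrite lt_neqAle hneg h0.
set g := fun s : R => V (s *: th).
set u := fun s : R => \sum_(k < n) g s 0 k ^+ 2.
have Hg (s : R) : is_derive s 1 g (th *m jacobian V (s *: th)) by exact: ray_derive.
have Hu (s : R) := @sqsum_derive _ _ g s _ (Hg s).
have ucont (s : R) : {for s, continuous u}.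
  apply: differentiable_continuous; apply/derivable1_diffP; by case: (Hu s).
have u0 : u 0 = 0.
  rewrite /u /g scale0r (@hom_jac _ _ _ V h (0) Hh) mul0mx scaler0.
  by apply: big1 => k _; rewrite mxE expr0n.
have uge0 (s : R) : 0 <= u s by apply: sumr_ge0 => k _; apply: sqr_ge0.
have dneg (s : R) : 0 < s -> 2 * \sum_(k < n) g s 0 k * (th *m jacobian V (s *: th)) 0 k <= 0.
  move=> s0.
  have E : th *m jacobian V (s *: th) = (h * s)^-1 *: g s.
    rewrite /g (@hom_jac _ _ _ V h (s *: th) Hh) -scalemxAl scalerA scalerA mulVf ?scale1r //.
    by rewrite mulf_neq0 // gt_eqF.
  rewrite E.
  have -> : \sum_(k < n) g s 0 k * ((h * s)^-1 *: g s) 0 k = (h * s)^-1 * u s.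
    rewrite /u mulr_sumr; apply: eq_bigr => k _; rewrite mxE; ring.
  rewrite pmulr_rle0 // nmulr_rle0 ?uge0 // invr_lt0 nmulr_rlt0 //.
have mono (s : R) : 0 < s -> s < 1 -> u 1 <= u s.
  move=> s0 s1.
  have [c cin Hc] := MVT s1 (fun x xin => Hu x) (continuous_in_subspaceT (fun x _ => ucont x)).
  have c0 : 0 < c by apply: lt_trans s0 _; rewrite (itvP cin).
  have := dneg c c0.
  move=> Hd; rewrite -subr_ge0 -[X in _ <= X]opprK oppr_ge0 opprB Hc.
  by apply: mulr_le0_ge0 => //; rewrite subr_ge0 ltW.
have u1le : u 1 <= 0.
  rewrite leNgt; apply/negP => u1pos.
  have H0 := (cvgrPdist_lt _ _).1 (ucont 0) (u 1) u1pos.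
  case: H0 => del /= del0 Hdel.
  set s := Num.min (del / 2) (1 / 2).
  have s0 : 0 < s by rewrite lt_min divr_gt0 //= divr_gt0.
  have s1 : s < 1 by rewrite gt_min; apply/orP; right; lra.
  have sd : s < del by rewrite gt_min; apply/orP; left; lra.
  have := Hdel s; rewrite /ball_ /= sub0r normrN gtr0_norm // => /(_ sd).
  rewrite u0 sub0r normrN ger0_norm //.
  have := mono s s0 s1; lra.
have : u 1 = 0 by apply/eqP; rewrite eq_le u1le uge0.
rewrite /u /g scale1r => /eqP; rewrite psumr_eq0; last by move=> k _; apply: sqr_ge0.
move=> /allP H; apply/rowP => k; rewrite mxE.
have := H k (mem_index_enum k); rewrite sqrf_eq0 => /eqP.
by [].
Qed.

Lemma dyn_eq (R : realType) n d (P : 'M[R]_n) (mu : 'rV[R]_n) (gamma : R)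
  (Vs Rw : 'rV[R]_n) (V : 'rV[R]_d -> 'rV[R]_n) (h : R) (x : 'rV[R]_d) :
  h != 0 -> homogeneous h V -> Vs = Rw + gamma *: (Vs *m P^T) ->
  \sum_j x 0 j * (- ((V x - Vs) *m (Amat P mu gamma)^T *m Jac V x)) 0 j
   = - h^-1 * \sum_k (mu 0 k * (V x 0 k - gamma * \sum_i P k i * V x 0 i - Rw 0 k)) * V x 0 k.
Proof.
move=> h0 Hh HV.
rewrite dot_eq mulNr mulr_sumr; congr (- _); apply: eq_bigr => k _.
have E : (x *m (Jac V x)^T) 0 k = h^-1 * V x 0 k.
  by rewrite [in RHS](Hh x) [in RHS]mxE mulrA mulVf // mul1r.
rewrite E (@wk_eq _ _ _ _ _ (V x) _ _ k HV); ring.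
Qed.

Theorem theorem1 (R : realType) (n d : nat) (P : 'M[R]_n) (mu : 'rV[R]_n)
  (r : 'I_n -> 'I_n -> R) (gamma : R) (Vstar : 'rV[R]_n)
  (V : 'rV[R]_d -> 'rV[R]_n) (h C l : R) (theta0 : 'rV[R]_d)
  (theta : R -> 'rV[R]_d) :
  stochastic P -> irreducible P -> aperiodic P -> stationary P mu ->
  0 <= gamma < 1 ->
  Vstar = exp_reward P r + gamma *: (Vstar *m P^T) ->
  C1 V -> homogeneous h V ->
  0 < C -> 0 < l ->
  (forall th, mu_norm mu (V th) <= C * powR (euclid_norm th) l) ->
  theta 0 = theta0 ->
  theta x @[x --> 0^'+] --> theta0 ->
  (forall t : R, 0 < t ->
     is_derive t 1 theta
       (- ((V (theta t) - Vstar) *m (Amat P mu gamma)^T *m Jac V (theta t)))) ->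
  (limf_einf (fun t : R => (mu_norm mu (V (theta t)))%:E) (+oo%R : set_system R)
     <= (mu_norm mu (exp_reward P r) / (1 - gamma))%:E)%E.
Proof.
move=> HP _ _ Hs /andP[g0 g1] HVs [dV _] Hhom _ _ _ _ _ Hder.
set Rw := exp_reward P r in HVs *.
set B := mu_norm mu Rw / (1 - gamma).
have lam0 : 0 < 1 - gamma by rewrite subr_gt0.
have B0 : 0 <= B by rewrite /B divr_ge0 ?sqrtr_ge0 // ltW.
apply: liminf_le => e e0 M.
case: (pselect (exists t, M < t /\ mu_norm mu (V (theta t)) <= B + e)) => // Hno.
exfalso.
have Hgt t : M < t -> B + e < mu_norm mu (V (theta t)).
  move=> Mt; rewrite ltNge; apply/negP => H; apply: Hno; by exists t.
have [hle0 | hgt0] := lerP h 0.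
  have V0 := @V_zero _ _ _ V h hle0 dV Hhom.
  have := Hgt (M + 1) ltac:(rewrite ltrDl; lra); rewrite V0 /mu_norm.
  rewrite big1 ?sqrtr0; first lra.
  by move=> k _; rewrite mxE expr0n /= mulr0.
set T := `|M| + 1.
have T0 : 0 < T by rewrite /T; have := normr_ge0 M; lra.
have MT : M < T by rewrite /T; have := ler_norm M; lra.
set phi := fun t => \sum_(j < d) theta t 0 j ^+ 2.
set D := fun t => - ((V (theta t) - Vstar) *m (Amat P mu gamma)^T *m Jac V (theta t)).
set dphi := fun t => 2 * \sum_(j < d) theta t 0 j * D t 0 j.
have Hphi (t : R) : 0 < t -> is_derive t 1 phi (dphi t).
  by move=> t0; exact: (@sqsum_derive _ _ theta t _ (Hder t t0)).
set c := (1 - gamma) * e ^+ 2 / h.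
have c0 : 0 < c by rewrite /c divr_gt0 // mulr_gt0 // exprn_gt0.
have dle (t : R) : T <= t -> dphi t <= - c.
  move=> Tt.
  have Mt : M < t by lra.
  rewrite /dphi /D (@dyn_eq _ _ _ P mu gamma Vstar Rw V h (theta t) (lt0r_neq0 hgt0) Hhom HVs).
  set v := V (theta t) in Mt *.
  have HG := @Gbound _ _ P mu gamma v Rw HP Hs g0 g1.
  set G := \sum_k (mu 0 k * (v 0 k - gamma * \sum_i P k i * v 0 i - Rw 0 k)) * v 0 k in HG *.
  have Hf := Hgt t Mt.
  rewrite /B /mu_norm -/v in Hf.
  set a2 := \sum_k mu 0 k * v 0 k ^+ 2 in HG Hf.
  set b2 := \sum_k mu 0 k * Rw 0 k ^+ 2 in HG Hf.
  have a20 : 0 <= a2 by apply: sumr_ge0 => k _; apply: mulr_ge0 => //; [exact: Hs.1|exact: sqr_ge0].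
  have b20 : 0 <= b2 by apply: sumr_ge0 => k _; apply: mulr_ge0 => //; [exact: Hs.1|exact: sqr_ge0].
  have ea := sqr_sqrtr a20; have eb := sqr_sqrtr b20.
  have sa0 := sqrtr_ge0 a2; have sb0 := sqrtr_ge0 b2.
  set sa := Num.sqrt a2 in Hf ea sa0; set sb := Num.sqrt b2 in Hf eb sb0.
  set lam := 1 - gamma in lam0 HG Hf *.
  have H1 : sb + lam * e < lam * sa.
    move: Hf; rewrite -(ltr_pM2l lam0) mulrDr mulrCA mulfV ?mulr1 //; exact: lt0r_neq0.
  have H2 : sb ^+ 2 + (lam * e) ^+ 2 <= (lam * sa) ^+ 2.
    have H3 : 0 <= sb + lam * e by apply: addr_ge0 => //; apply: mulr_ge0; apply: ltW.
    have H5 : (sb + lam * e) ^+ 2 <= (lam * sa) ^+ 2 by rewrite ler_sqr // ?nnegrE //; lra.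
    have H6 : 0 <= sb * (lam * e) by apply: mulr_ge0 => //; apply: mulr_ge0; apply: ltW.
    nra.
  have G2 : lam * e ^+ 2 <= 2 * G.
    have : lam * (lam * e ^+ 2) <= lam * (2 * G).
      move: H2; rewrite !exprMn ea eb; nra.
    by rewrite ler_pM2l.
  have hi0 : 0 < h^-1 by rewrite invr_gt0.
  rewrite /lam in G2.
  have := mulr_ge0 (ltW hi0) (ltac:(rewrite subr_ge0; exact: G2) : 0 <= 2 * G - (1 - gamma) * e ^+ 2).
  rewrite /c; nra.
have phi0 (t : R) : 0 <= phi t by apply: sumr_ge0 => j _; apply: sqr_ge0.
set T1 := T + phi T / c + 1.
have TT1 : T < T1 by rewrite /T1; have := divr_ge0 (phi0 T) (ltW c0); lra.
have cont (x : R) : 0 < x -> {for x, continuous phi}.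
  move=> x0; apply: differentiable_continuous; apply/derivable1_diffP.
  by case: (Hphi x x0).
have HMa : forall x, x \in `]T, T1[ -> is_derive x 1 phi (dphi x).
  move=> x xin; apply: Hphi; have Tx : T < x by rewrite (itvP xin).
  exact: lt_trans T0 Tx.
have HMb : {within `[T, T1], continuous phi}.
  apply: continuous_in_subspaceT => x xin; apply: cont.
  have Tx : T <= x by move: xin; rewrite inE /= in_itv /= => /andP[].
  exact: lt_le_trans T0 Tx.
have [xi xin Hxi] := MVT TT1 HMa HMb.
have Txi : T <= xi by rewrite ltW // (itvP xin).
have Hd := dle xi Txi.
have E1 : T1 - T = phi T / c + 1 by rewrite /T1; ring.
have E2 : c * (phi T / c) = phi T by rewrite mulrCA mulfV ?mulr1 // gt_eqF.
have H3 : dphi xi * (T1 - T) <= - c * (T1 - T).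
  by apply: ler_wpM2r => //; rewrite subr_ge0 ltW.
have E3 : - c * (T1 - T) = - phi T - c by rewrite E1 mulrDr mulr1 mulNr E2.
rewrite E3 -Hxi in H3.
have := phi0 T1; lra.
Qed.
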